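(* Let $n,k\ge1$ and let $\mathcal{O}_x$ be a square Hermitian orthogonal design of size $[n,n,2k-1]$. Then there exists an $n\times n$ matrix $\mathcal{L}_x$, each entry of which is a complex multiple of $x_{2k}$, such that $\mathcal{O}_x+\mathcal{L}_x$ is a square Hermitian orthogonal design of size $[n,n,2k]$; equivalently, substituting $x_{2i-1}=(z_i+z_i^* )/2$ and $x_{2i}=(z_i-z_i^* )/(2\sqrt{-1})$ for $i=1,\ldots,k$, $\mathcal{O}_x+\mathcal{L}_x$ becomes a square complex orthogonal design of size $[n,n,k]$.
   Context: Let $x_1,x_2,\ldots$ be formal real indeterminates. A Hermitian orthogonal design (HOD) of size $[p,n,m]$ is a $p\times n$ matrix $\mathcal{O}_x$ whose entries are complex linear combinations of $x_1,\ldots,x_m$ such that $\mathcal{O}_x^H\mathcal{O}_x=(x_1^2+\cdots+x_m^2)I_n$; square if $p=n$. With $z_1,\ldots,z_k$ formal complex indeterminates, a square complex orthogonal design of size $[n,n,k]$ is an $n\times n$ matrix whose entries are complex linear combinations of $z_1,\ldots,z_k,z_1^*,\ldots,z_k^*$ such that $\mathcal{O}_z^H\mathcal{O}_z=(|z_1|^2+\cdots+|z_k|^2)I_n$. *)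

(* Defs.v *)
From HB Require Import structures.
From mathcomp Require Import all_boot all_order all_algebra.
Set Implicit Arguments. Unset Strict Implicit. Unset Printing Implicit Defensive.
Import Order.TTheory GRing.Theory Num.Theory Num.Syntax.
Local Open Scope ring_scope.

Definition hermmx (C : numClosedFieldType) (p q : nat) (A : 'M[C]_(p, q)) : 'M[C]_(q, p) :=
  (map_mx Num.conj A)^T.

(* A p x q matrix whose entries are complex linear combinations of the
   formal real indeterminates x_1..x_m is encoded by its coefficient
   matrices A 0, ..., A (m-1) (index i <-> x_{i+1}); its value at x is: *)
Definition hod_eval (C : numClosedFieldType) (p q m : nat)
  (A : nat -> 'M[C]_(p, q)) (x : nat -> C) : 'M[C]_(p, q) :=
  \sum_(i < m) x i *: A i.

(* Hermitian orthogonal design of size [p,q,m]: O^H O = (x_1^2+...+x_m^2) I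
   as an identity in the real indeterminates (i.e. for all real values). *)
Definition is_HOD (C : numClosedFieldType) (p q m : nat)
  (A : nat -> 'M[C]_(p, q)) : Prop :=
  forall x : nat -> C, (forall i, x i \is Num.real) ->
    hermmx (hod_eval m A x) *m hod_eval m A x = (\sum_(i < m) x i ^+ 2)%:M.

Definition is_CSOD (C : numClosedFieldType) (n k : nat)
  (F : (nat -> C) -> 'M[C]_n) : Prop :=
  (exists B D : nat -> 'M[C]_n, forall z : nat -> C,
      F z = \sum_(i < k) (z i *: B i + (Num.conj (z i)) *: D i))
  /\ forall z : nat -> C,
      hermmx (F z) *m F z = (\sum_(i < k) z i * Num.conj (z i))%:M.

(* The substitution x_{2i-1} = (z_i + conj(z_i))/2, x_{2i} = (z_i - conj(z_i))/(2 sqrt(-1)),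
   written 0-based: x (2i) and x (2i+1) come from z i. *)
Definition subst_z (C : numClosedFieldType) (z : nat -> C) : nat -> C :=
  fun j => if odd j
           then (z j./2 - Num.conj (z j./2)) / (2 * 'i)
           else (z j./2 + Num.conj (z j./2)) / 2.

(* Main.v *)
Require Import Defs.
From HB Require Import structures.
From mathcomp Require Import all_boot all_order all_algebra.
From mathcomp Require Import zify ring.
Import Order.TTheory GRing.Theory Num.Theory.
Local Open Scope ring_scope.


Section Herm.
Variable C : numClosedFieldType.
Local Notation H := (@hermmx C _ _).

Lemma hermM p q r (A : 'M[C]_(p,q)) (B : 'M[C]_(q,r)) : H (A *m B) = H B *m H A.
Proof. by rewrite /hermmx map_mxM trmx_mul. Qed.
Lemma hermD p q (A B : 'M[C]_(p,q)) : H (A + B) = H A + H B.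
Proof. by rewrite /hermmx map_mxD linearD. Qed.
Lemma hermN p q (A : 'M[C]_(p,q)) : H (- A) = - H A.
Proof. by rewrite /hermmx map_mxN linearN. Qed.
Lemma hermZ p q a (A : 'M[C]_(p,q)) : H (a *: A) = a^* *: H A.
Proof. by rewrite /hermmx map_mxZ linearZ. Qed.
Lemma herm1 p : H (1%:M : 'M[C]_p) = 1%:M.
Proof. by rewrite /hermmx map_mx1 trmx1. Qed.
Lemma herm_sum p q m (F : 'I_m -> 'M[C]_(p,q)) : H (\sum_(i < m) F i) = \sum_(i < m) H (F i).
Proof. by elim/big_rec2: _ => [|i x y _ <-]; rewrite ?hermD // /hermmx map_mx0 trmx0. Qed.
End Herm.


Section S.
Variable C : numClosedFieldType.
Local Notation H := (@hermmx C _ _).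

Lemma HOD_of n m (A : nat -> 'M[C]_n) :
  (forall i, (i < m)%N -> H (A i) *m A i = 1%:M) ->
  (forall i j, (i < m)%N -> (j < m)%N -> i != j -> H (A i) *m A j + H (A j) *m A i = 0) ->
  is_HOD m A.
Proof.
move=> h1 h2 x xr; rewrite /hod_eval herm_sum.
under eq_bigr do rewrite hermZ conj_Creal //.
rewrite mulmx_suml.
set S := \sum_i _.
have E: S = \sum_(i<m) \sum_(j<m) (x i * x j) *: (H (A i) *m A j).
  rewrite /S; apply eq_bigr => i _; rewrite mulmx_sumr; apply eq_bigr => j _.
  by rewrite -scalemxAl -scalemxAr scalerA.
have E2: S *+ 2 = \sum_(i<m) \sum_(j<m) ((x i * x j) *: (H (A i) *m A j) + (x j * x i) *: (H (A j) *m A i)).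
  rewrite mulr2n E [in X in _ + X]exchange_big -big_split; apply eq_bigr => i _.
  by rewrite -big_split.
have E3: S *+ 2 = (\sum_(i < m) x i ^+ 2)%:M *+ 2.
  rewrite E2 -scalemx1 scaler_suml -sumrMnl; apply eq_bigr => i _.
  rewrite (bigD1 i) //= big1 ?addr0 => [|j ji].
    by rewrite h1 // -expr2 scalemx1 mulr2n.
  rewrite [x j * _]mulrC -scalerDr h2 ?scaler0 //.
  by move: ji; rewrite eq_sym.
have two: (2 : C) != 0 by rewrite pnatr_eq0.
apply: (scalerI two); by rewrite !scaler_nat.
Qed.

Lemma sum_ind_sc m i (f : nat -> C) : (i < m)%N ->
  \sum_(l < m) (((l : nat) == i)%:R * f l) = f i.
Proof.
move=> hi; rewrite (bigD1 (Ordinal hi)) //= eqxx mul1r big1 ?addr0 // => j ji.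
suff ->: ((j : nat) == i) = false by rewrite mul0r.
by apply/negbTE; move: ji; rewrite -val_eqE.
Qed.

Lemma sum_ind_mx n m i (f : nat -> 'M[C]_n) : (i < m)%N ->
  \sum_(l < m) (((l : nat) == i)%:R *: f l) = f i.
Proof.
move=> hi; rewrite (bigD1 (Ordinal hi)) //= eqxx scale1r big1 ?addr0 // => j ji.
suff ->: ((j : nat) == i) = false by rewrite scale0r.
by apply/negbTE; move: ji; rewrite -val_eqE.
Qed.

Lemma HOD_1 n m (A : nat -> 'M[C]_n) : is_HOD m A ->
  forall i, (i < m)%N -> H (A i) *m A i = 1%:M.
Proof.
move=> h i hi; have := h (fun l => ((l == i)%:R : C)) (fun _ => realn _ _).
rewrite /hod_eval sum_ind_mx // => ->.
have ->: \sum_(l < m) ((((l:nat) == i)%:R : C) ^+ 2) = \sum_(l < m) (((l:nat) == i)%:R * 1).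
  by apply eq_bigr => l _; case: (_ == _); rewrite ?expr0n ?expr1n ?mulr1.
by rewrite (@sum_ind_sc _ _ (fun _ => 1)) //.
Qed.

Lemma HOD_2 n m (A : nat -> 'M[C]_n) : is_HOD m A ->
  forall i j, (i < m)%N -> (j < m)%N -> i != j -> H (A i) *m A j + H (A j) *m A i = 0.
Proof.
move=> h i j hi hj ij.
have := h (fun l => ((l == i)%:R + (l == j)%:R : C)) (fun _ => realD (realn _ _) (realn _ _)).
rewrite /hod_eval.
under eq_bigr do rewrite scalerDl.
rewrite big_split /= !sum_ind_mx //.
have ->: \sum_(l < m) ((((l:nat) == i)%:R + ((l:nat) == j)%:R : C) ^+ 2) =
   \sum_(l < m) (((l:nat) == i)%:R * 1) + \sum_(l < m) (((l:nat) == j)%:R * 1).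
  rewrite -big_split; apply eq_bigr => l _ /=.
  case: eqP => [->|_]; first by rewrite (negbTE ij) /= addr0 expr1n !mulr1 addr0.
  by case: (_ == _); rewrite /= ?(add0r, addr0, expr2, mulr1, mul1r, mul0r).
rewrite !(@sum_ind_sc _ _ (fun _ => 1)) // hermD mulmxDl !mulmxDr !(HOD_1 _ _ _ h) //.
move=> e; apply: (addrI (1%:M + 1%:M)); rewrite addr0 -[in RHS]raddfD /= -[in RHS]e.
by rewrite -!addrA; congr (_ + _); rewrite addrC -addrA.
Qed.
End S.

Lemma mem_cons_r {T : eqType} {i : T} {r : seq T} (a : T) : i \in r -> i \in a :: r.
Proof. by move=> ir; rewrite inE ir orbT. Qed.

Lemma anticomm_prod (R : pzRingType) (M : nat -> R) j (r : seq nat) :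
  (forall i, i \in r -> i != j -> M j * M i = - (M i * M j)) ->
  M j * \prod_(i <- r) M i = (-1)^+(count (predC1 j) r) * (\prod_(i <- r) M i * M j).
Proof.
elim: r => [|a r IH] h; first by rewrite big_nil mul1r mulr1 expr0 mul1r.
have IH' := IH (fun i ir => h i (mem_cons_r _ ir)).
rewrite big_cons /= mulrA.
case: eqP => [->|/eqP aj].
  by rewrite /= add0n -mulrA [in LHS]IH' mulrA (commr_sign (M j)) -!mulrA.
rewrite /= h ?mem_head // mulNr -mulrA [in LHS]IH' mulrA (commr_sign (M a)).
by rewrite ?add1n exprS mulN1r mulNr -!mulrA.
Qed.

Lemma herm_prod (R : pzRingType) (h : R -> R) (M : nat -> R) (r : seq nat) :
  (forall a b, h (a * b) = h b * h a) -> (forall a, h (- a) = - h a) -> h 1 = 1 ->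
  uniq r ->
  (forall i, i \in r -> h (M i) = - M i) ->
  (forall i j, i \in r -> j \in r -> i != j -> M j * M i = - (M i * M j)) ->
  exists e, h (\prod_(i <- r) M i) = (-1)^+e * \prod_(i <- r) M i.
Proof.
move=> hM hN h1; elim: r => [|a r IH] ur hh ha.
  by exists 0%N; rewrite big_nil h1 expr0 mul1r.
case/andP: ur => ar ur.
have [e He] := IH ur (fun i ir => hh i (mem_cons_r _ ir))
  (fun i j ir jr => ha i j (mem_cons_r _ ir) (mem_cons_r _ jr)).
have Hc := @anticomm_prod _ M a r
  (fun i ir ia => ha i a (mem_cons_r _ ir) (mem_head _ _) ia).
exists (e + count (predC1 a) r).+1.
rewrite big_cons hM He hh ?mem_head // mulrN -mulrA.
rewrite -[\prod_(i <- r) M i * M a](signrMK (count (predC1 a) r)) -Hc.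
by rewrite exprS mulN1r mulNr exprD !mulrA.
Qed.

Lemma unit_prod (R : pzRingType) (h : R -> R) (M : nat -> R) (r : seq nat) :
  (forall a b, h (a * b) = h b * h a) -> h 1 = 1 ->
  (forall i, i \in r -> h (M i) * M i = 1) ->
  h (\prod_(i <- r) M i) * \prod_(i <- r) M i = 1.
Proof.
move=> hM h1; elim: r => [|a r IH] hh; first by rewrite big_nil h1 mul1r.
rewrite big_cons hM -mulrA [h (M a) * _]mulrA hh ?mem_head // mul1r.
exact: IH (fun i ir => hh i (mem_cons_r _ ir)).
Qed.


Lemma hermK (C : numClosedFieldType) p q (A : 'M[C]_(p,q)) : hermmx (hermmx A) = A.
Proof. by apply/matrixP => i j; rewrite /hermmx !mxE conjCK. Qed.

Lemma sum_double (V : nmodType) k (F : nat -> V) :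
  \sum_(j < k.*2) F j = \sum_(i < k) (F i.*2 + F i.*2.+1).
Proof.
elim: k => [|k IH]; first by rewrite !big_ord0.
by rewrite doubleS !big_ord_recr /= IH addrA.
Qed.

Theorem corollary2 (C : numClosedFieldType) (n k : nat)
  (hn : (1 <= n)%N) (hk : (1 <= k)%N) (A : nat -> 'M[C]_n) :
  is_HOD (k.*2.-1) A ->
  exists Lc : 'M[C]_n,
    let A' := fun i : nat => if i == k.*2.-1 then Lc else A i in
    is_HOD (k.*2) A' /\
    is_CSOD k (fun z => hod_eval (k.*2) A' (subst_z z)).
Proof.
case: n hn A => // n _ A hA.
set m := k.*2.-1.
have km : k.*2 = m.+1 by rewrite /m; lia.
have m0 : (0 < m)%N by rewrite /m; lia.
pose H := @hermmx C n.+1 n.+1.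
have hMr : forall a b : 'M[C]_n.+1, H (a * b) = H b * H a by move=> a b; exact: hermM.
have hNr : forall a : 'M[C]_n.+1, H (- a) = - H a by move=> a; exact: hermN.
have h1r : H 1 = 1 by exact: herm1.
have h1 := @HOD_1 _ _ _ _ hA; have h2 := @HOD_2 _ _ _ _ hA.
pose A0 := A 0%N.
have HA0 : H A0 * A0 = 1 by exact: h1 0%N m0.
have A0H : A0 * H A0 = 1 by exact: mulmx1C.
pose M i := H A0 * A i.
have eA : forall i, (0 < i < m)%N -> H (A i) * A0 = - M i.
  move=> i /andP[i0 im]; apply/eqP; rewrite -addr_eq0 addrC; apply/eqP.
  by apply: h2 => //; rewrite eq_sym -lt0n.
have HM : forall i, (0 < i < m)%N -> H (M i) = - M i.
  by move=> i hi; rewrite hMr /H hermK -/H eA.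
have MM : forall i j, (0 < i < m)%N -> M i * M j = - (H (A i) * A j).
  move=> i j hi; rewrite /M mulrA -[H A0 * A i]opprK -eA //.
  by rewrite !mulNr -(mulrA _ A0) A0H mulr1.
have anti : forall i j, (0 < i < m)%N -> (0 < j < m)%N -> i != j -> M j * M i = - (M i * M j).
  move=> i j hi hj ij; rewrite !MM // opprK; apply/eqP; rewrite eq_sym -addr_eq0.
  by apply/eqP; apply: h2 => //; [case/andP: hi | case/andP: hj].
have uM : forall i, (0 < i < m)%N -> H (M i) * M i = 1.
  by move=> i hi; rewrite HM // mulNr MM // opprK; apply: h1; case/andP: hi.
pose r := iota 1 m.-1.
have mr : forall i, (i \in r) = (0 < i < m)%N.
  by move=> i; rewrite mem_iota add1n prednK.
pose P := \prod_(i <- r) M i.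
have [e He] : exists e, H P = (-1)^+e * P.
  apply: herm_prod => //; first exact: iota_uniq.
    by move=> i; rewrite mr; apply: HM.
  by move=> i j; rewrite !mr; apply: anti.
have UP : H P * P = 1.
  by apply: unit_prod => // i; rewrite mr; apply: uM.
have anticP : forall j, (0 < j < m)%N -> M j * P = - (P * M j).
  move=> j hj; rewrite /P anticomm_prod; last by move=> i; rewrite mr => hi ij; apply: anti.
  suff ->: (-1) ^+ count (predC1 j) r = -1 :> 'M[C]_n.+1 by rewrite mulN1r.
  have cr : (count (predC1 j) r).+1 = m.-1.
    rewrite -(size_iota 1 m.-1) -(count_predC (pred1 j)) -/r.
    have ->: count (pred1 j) r = 1%N.
      by rewrite (count_uniq_mem _ (iota_uniq _ _)) -/r mr hj.
    by rewrite add1n; congr _.+1; apply: eq_count.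
  have : (-1) ^+ (count (predC1 j) r).+1 = 1 :> 'M[C]_n.+1.
    by rewrite cr (_ : m.-1 = 2 * k.-1)%N ?(mulnC 2) ?exprM ?sqrr_sign // /m; lia.
  by rewrite exprS mulN1r => /eqP; rewrite eqr_oppLR => /eqP.
pose N := if odd e then P else 'i *: P.
have HN : H N = - N.
  rewrite /N; case: ifP => oe.
    by rewrite He -signr_odd oe expr1 mulN1r.
  rewrite /H hermZ -/H He -signr_odd oe expr0 mul1r conjCi scaleNr //.
have UN : H N * N = 1.
  rewrite /N; case: ifP => oe //.
  rewrite /H hermZ -/H -scalerAl -scalerAr scalerA conjCi mulNr -expr2 sqrCi opprK.
  by rewrite scale1r.
have NA : forall j, (0 < j < m)%N -> M j * N = - (N * M j).
  move=> j hj; rewrite /N; case: ifP => _; first exact: anticP.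
  by rewrite -scalerAr -scalerAl anticP // scalerN.
pose L := A0 * N.
have hL1 : H L * L = 1.
  by rewrite hMr -mulrA (mulrA (H A0)) HA0 mul1r.
have hL2 : forall j, (j < m)%N -> H L * A j + H (A j) * L = 0.
  move=> j jm; case: j jm => [|j] jm.
    by rewrite hMr -mulrA HA0 mulr1 mulrA -/A0 HA0 mul1r HN addNr.
  have hj : (0 < j.+1 < m)%N by rewrite jm.
  rewrite hMr -mulrA -/(M j.+1) /L mulrA eA // HN mulNr mulNr NA // opprK addNr //.
clearbody L; exists L => A'.
have hH : is_HOD (k.*2) A'.
  rewrite km; apply: HOD_of.
    move=> i; rewrite ltnS leq_eqVlt => /orP[/eqP ->|im]; rewrite /A' ?eqxx //.
    by rewrite ltn_eqF //; apply: h1.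
  move=> i j; rewrite !ltnS [(i <= m)%N]leq_eqVlt [(j <= m)%N]leq_eqVlt => /orP[/eqP ->|im] /orP[/eqP ->|jm] ij;
    rewrite /A'.
  - by rewrite eqxx in ij.
  - by rewrite eqxx (ltn_eqF jm); apply: hL2.
  - by rewrite eqxx (ltn_eqF im) addrC; apply: hL2.
  - by rewrite (ltn_eqF im) (ltn_eqF jm); apply: h2.
have reI : forall a : C, (a - a^*) / (2 * 'i) = 'Im a.
  by move=> a; rewrite ImE invfM invCi; ring.
split => //; split.
  exists (fun i : nat => 2^-1 *: A' i.*2 + (2 * 'i)^-1 *: A' i.*2.+1).
  exists (fun i : nat => 2^-1 *: A' i.*2 - (2 * 'i)^-1 *: A' i.*2.+1); move=> z.
  rewrite /= /hod_eval (sum_double _ _ (fun j => subst_z z j *: A' j)); apply: eq_bigr => i _.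
  rewrite /subst_z /= !odd_double /= doubleK uphalf_double.
  rewrite !scalerDr scalerN !scalerA !mulrDl !scalerDl mulNr scaleNr.
  by rewrite addrACA.
move=> z.
have real : forall j, subst_z z j \is Num.real.
  move=> j; rewrite /subst_z; case: odd; first by rewrite reI; exact: Creal_Im.
  by rewrite -ReE; exact: Creal_Re.
rewrite (hH _ real); congr _%:M.
rewrite (sum_double _ _ (fun j => subst_z z j ^+ 2)); apply: eq_bigr => i _.
by rewrite /subst_z /= !odd_double /= doubleK uphalf_double -ReE reI -normC2_Re_Im normCK.
Qed.
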